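(* Under the hypotheses of Theorem 1 (convex $f_i$ with subgradients bounded by $L$, closed convex $\Omega$, $W$ nonnegative doubly stochastic with positive diagonal and strongly connected positive-entry graph, second-largest singular value $\sigma<1$; positive nonincreasing step-sizes $\alpha(t)$, square summable but not summable, with $\sum_{k=1}^t\alpha(k)\le C_\alpha\sum_{k=\lceil t/2\rceil}^t\alpha(k)$ and $\alpha(\lfloor t/2\rfloor)\le C_\alpha'\alpha(t)$ for all $t$; iteration $x(t+1)=W P_\Omega[x(t)-\alpha(t)g(t)]$ with identical initial rows in $\Omega$), there is an absolute constant $c>0$ such that for all $t$ with $$t\ge\frac{c}{1-\sigma}\log\frac{(1-\sigma)\,t\,\alpha_{\max}}{C_\alpha'\alpha(t)}$$ we have $$\|x(t)-\mathbf 1\overline{x}(t)\|_F\le\frac{2C_\alpha'\alpha(t)L\sqrt n}{1-\sigma}.$$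
   Context: $x(t)$ is the $n\times d$ matrix with rows $x_i(t)$; $g(t)$ has rows $g_i(t)$, a subgradient of $f_i$ at $x_i(t)$; $P_\Omega$ is row-wise Euclidean projection onto $\Omega$; $\overline{x}(t)=\frac1n\sum_i x_i(t)$ (a row vector), $\mathbf 1$ is the all-ones column vector in $\mathbb{R}^n$, so $\mathbf 1\overline{x}(t)$ is $n\times d$; $\|\cdot\|_F$ is the Frobenius norm; $\alpha_{\max}=\max_t\alpha(t)$. *)

(* Defs.v *)
From HB Require Import structures.
From Stdlib Require Import Reals Lra Relations.
From mathcomp Require Import ssreflect ssrfun ssrbool eqtype ssrnat seq fintype bigop.

Set Implicit Arguments.
Unset Strict Implicit.
Unset Printing Implicit Defensive.

Open Scope R_scope.

HB.instance Definition _ := Monoid.isComLaw.Build R 0 Rplus (fun a b c => esym (Rplus_assoc a b c)) Rplus_comm Rplus_0_l.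

Definition vec (d : nat) := 'I_d -> R.
Definition mat (n m : nat) := 'I_n -> 'I_m -> R.

Definition dot (d : nat) (u v : vec d) : R := \big[Rplus/0]_(k < d) (u k * v k).
Definition vnorm (d : nat) (v : vec d) : R := sqrt (dot v v).

Definition vadd (d : nat) (u v : vec d) : vec d := fun k => u k + v k.
Definition vsub (d : nat) (u v : vec d) : vec d := fun k => u k - v k.
Definition vscale (d : nat) (a : R) (u : vec d) : vec d := fun k => a * u k.

Definition convex_fun (d : nat) (f : vec d -> R) : Prop :=
  forall (x y : vec d) (l : R), 0 <= l <= 1 ->
    f (vadd (vscale l x) (vscale (1 - l) y)) <= l * f x + (1 - l) * f y.

Definition convex_vset (d : nat) (Om : vec d -> Prop) : Prop :=
  forall (x y : vec d) (l : R), Om x -> Om y -> 0 <= l <= 1 ->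
    Om (vadd (vscale l x) (vscale (1 - l) y)).

Definition closed_vset (d : nat) (Om : vec d -> Prop) : Prop :=
  forall (u : nat -> vec d) (y : vec d),
    (forall m, Om (u m)) ->
    (forall eps, 0 < eps -> exists N, forall m, (N <= m)%nat -> vnorm (vsub (u m) y) < eps) ->
    Om y.

Definition is_subgradient (d : nat) (f : vec d -> R) (x g : vec d) : Prop :=
  forall y : vec d, f x + dot g (vsub y x) <= f y.

Definition is_proj (d : nat) (Om : vec d -> Prop) (x p : vec d) : Prop :=
  Om p /\ forall y, Om y -> vnorm (vsub x p) <= vnorm (vsub x y).

Definition mmul (n d : nat) (W : mat n n) (Y : mat n d) : mat n d :=
  fun i k => \big[Rplus/0]_(j < n) (W i j * Y j k).

Definition frob (n d : nat) (M : mat n d) : R :=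
  sqrt (\big[Rplus/0]_(i < n) \big[Rplus/0]_(k < d) (M i k * M i k)).

Definition row_avg (n d : nat) (X : mat n d) : vec d :=
  fun k => / INR n * \big[Rplus/0]_(i < n) X i k.
Definition consensus_err (n d : nat) (X : mat n d) : mat n d :=
  fun i k => X i k - row_avg X k.

Definition doubly_stochastic (n : nat) (W : mat n n) : Prop :=
  (forall i j, 0 <= W i j) /\
  (forall i, \big[Rplus/0]_(j < n) W i j = 1) /\
  (forall j, \big[Rplus/0]_(i < n) W i j = 1).

Definition strongly_connected (n : nat) (W : mat n n) : Prop :=
  forall i j : 'I_n, clos_refl_trans 'I_n (fun a b => 0 < W a b) i j.

Definition orthogonal_mat (n : nat) (Q : mat n n) : Prop :=
  forall i j, \big[Rplus/0]_(k < n) (Q k i * Q k j) = if i == j then 1 else 0.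

Definition singular_values (n : nat) (W : mat n n) (s : 'I_n -> R) : Prop :=
  (exists U V : mat n n, orthogonal_mat U /\ orthogonal_mat V /\
     forall i j, W i j = \big[Rplus/0]_(k < n) (U i k * s k * V j k)) /\
  (forall k, 0 <= s k) /\
  (forall k l : 'I_n, (k <= l)%nat -> s l <= s k).

Definition second_singular_value (n : nat) (hn : (1 < n)%nat) (W : mat n n) (sigma : R) : Prop :=
  exists s, singular_values W s /\ sigma = s (Ordinal hn).

Definition psum (u : nat -> R) (a b : nat) : R := \big[Rplus/0]_(a <= k < b.+1) u k.

(* Main.v *)
Require Import Defs.
From HB Require Import structures.
From Stdlib Require Import Reals Relations Lra Psatz FunctionalExtensionality.
From mathcomp Require Import ssreflect ssrfun ssrbool eqtype ssrnat seq fintype bigop.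
Open Scope R_scope.
Set Implicit Arguments.
Unset Strict Implicit.

Notation "'SUM_' ( i : I ) F" := (\big[Rplus/0]_(i : I) F) (at level 41, i at level 0, F at level 41).

Section Sums.
Variable I : finType.
Implicit Types F G : I -> R.

Lemma sumS F a : \big[Rplus/0]_(i : I) (a * F i) = a * \big[Rplus/0]_(i : I) F i.
Proof. apply: (big_rec2 (fun u v => u = a * v)); first ring.
move=> i y1 y2 _ ->; ring. Qed.

Lemma sumD F G : \big[Rplus/0]_(i : I) (F i + G i) = \big[Rplus/0]_(i : I) F i + \big[Rplus/0]_(i : I) G i.
Proof. by rewrite big_split. Qed.

Lemma sum_ext F G : (forall i, F i = G i) -> \big[Rplus/0]_(i : I) F i = \big[Rplus/0]_(i : I) G i.
Proof. move=> h; by apply: eq_bigr => i _. Qed.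

Lemma sum_le F G : (forall i, F i <= G i) -> \big[Rplus/0]_(i : I) F i <= \big[Rplus/0]_(i : I) G i.
Proof. move=> h; apply: (big_ind2 (fun u v => u <= v)) => //; [lra| move=> *; lra]. Qed.

Lemma sum_ge0 (P : pred I) F : (forall i, 0 <= F i) -> 0 <= \big[Rplus/0]_(i | P i) F i.
Proof. move=> h; apply: (big_ind (fun u => 0 <= u)) => //; [lra| move=> *; lra]. Qed.

Lemma sum_term F j : (forall i, 0 <= F i) -> F j <= \big[Rplus/0]_(i : I) F i.
Proof. move=> h; rewrite (bigD1 j) //=; have := sum_ge0 (fun i => i != j) h; lra. Qed.

Lemma sum0_each F j : (forall i, 0 <= F i) -> \big[Rplus/0]_(i : I) F i = 0 -> F j = 0.
Proof. move=> h s; have := sum_term j h; have := h j; lra. Qed.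

Lemma sum_delta F (k : I) : \big[Rplus/0]_(l : I) (F l * (if k == l then 1 else 0)) = F k.
Proof. rewrite (bigD1 k) //= eqxx big1; first ring.
move=> i /= hi; rewrite eq_sym (negbTE hi); ring. Qed.

Lemma sumM F G : (\big[Rplus/0]_(i : I) F i) * (\big[Rplus/0]_(i : I) G i) =
  \big[Rplus/0]_(i : I) \big[Rplus/0]_(j : I) (F i * G j).
Proof. rewrite Rmult_comm -sumS; apply: sum_ext => j.
rewrite Rmult_comm -sumS; apply: sum_ext => i; ring. Qed.

Lemma quad_CS A B C : 0 <= B -> (forall l, 0 <= A - 2 * l * C + l^2 * B) -> C^2 <= A * B.
Proof. move=> hB h. have hA := h 0. 
case: (Req_dec B 0) => hB0.
- case: (Req_dec C 0) => hC0; first (subst; nra).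
  have := h ((A + 1) / (2 * C)). rewrite hB0. 
  have -> : A - 2 * ((A + 1) / (2 * C)) * C + ((A + 1) / (2 * C)) ^ 2 * 0 = -1 by field.
  lra.
- have := h (C / B). 
  have -> : A - 2 * (C / B) * C + (C / B) ^ 2 * B = (A * B - C^2) / B by field.
  move=> hh. have hB' : 0 < B by lra.
  have : 0 <= (A * B - C ^ 2) / B * B by apply: Rmult_le_pos; lra.
  have -> : (A * B - C ^ 2) / B * B = A * B - C^2 by field.
  lra.
Qed.

Lemma sq_expand F G l : \big[Rplus/0]_(i : I) (F i - l * G i)^2 =
  \big[Rplus/0]_(i : I) (F i)^2 - 2 * l * \big[Rplus/0]_(i : I) (F i * G i) + l^2 * \big[Rplus/0]_(i : I) (G i)^2.
Proof. rewrite -!sumS. rewrite (sum_ext (G := fun i => (F i)^2 + ((-(2*l)) * (F i * G i) + l^2 * (G i)^2))); last by move=> i; ring.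
rewrite !sumD !sumS; ring. Qed.

Lemma CS F G : (\big[Rplus/0]_(i : I) (F i * G i))^2 <=
  \big[Rplus/0]_(i : I) (F i)^2 * \big[Rplus/0]_(i : I) (G i)^2.
Proof. apply: quad_CS; first by apply: sum_ge0 => i; apply: pow2_ge_0.
move=> l; rewrite -sq_expand; apply: sum_ge0 => i; apply: pow2_ge_0. Qed.

Lemma mink_abs A B C : 0 <= A -> 0 <= B -> C^2 <= A * B -> sqrt (A + 2 * C + B) <= sqrt A + sqrt B.
Proof. move=> hA hB hC.
have sA := sqrt_pos A; have sB := sqrt_pos B.
have hC' : C <= sqrt A * sqrt B.
{ rewrite -sqrt_mult //. have hAB: 0 <= A * B by nra.
  case: (Rle_lt_dec C 0) => h; first (have := sqrt_pos (A*B); lra).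
  rewrite -(sqrt_pow2 C); last lra. by apply: sqrt_le_1_alt. }
rewrite -(sqrt_square (sqrt A + sqrt B)); last lra.
apply: sqrt_le_1_alt.
have : (sqrt A + sqrt B) * (sqrt A + sqrt B) = A + 2 * (sqrt A * sqrt B) + B.
{ have e1 := sqrt_sqrt A hA; have e2 := sqrt_sqrt B hB. nra. }
lra. Qed.

Lemma mink F G : sqrt (\big[Rplus/0]_(i : I) (F i + G i)^2) <=
  sqrt (\big[Rplus/0]_(i : I) (F i)^2) + sqrt (\big[Rplus/0]_(i : I) (G i)^2).
Proof.
have -> : \big[Rplus/0]_(i : I) (F i + G i)^2 = \big[Rplus/0]_(i : I) (F i)^2 + 2 * \big[Rplus/0]_(i : I) (F i * G i) + \big[Rplus/0]_(i : I) (G i)^2.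
{ rewrite -sumS -!sumD; apply: sum_ext => i; ring. }
apply: mink_abs; try (apply: sum_ge0 => i; apply: pow2_ge_0). exact: CS. Qed.

End Sums.

Lemma sum_const n c : \big[Rplus/0]_(i < n) c = INR n * c.
Proof. elim: n => [|n IH]; first by rewrite big_ord0 /=; ring.
rewrite big_ord_recr /= IH; case: n {IH} => [|n] /=; ring. Qed.


Lemma orth_norm n (M : mat n n) (b : 'I_n -> R) : orthogonal_mat M ->
  \big[Rplus/0]_(i < n) (\big[Rplus/0]_(k < n) (M i k * b k))^2 = \big[Rplus/0]_(k < n) (b k)^2.
Proof. move=> hM.
rewrite (sum_ext (G := fun i => \big[Rplus/0]_(k < n) \big[Rplus/0]_(l < n) (M i k * b k * (M i l * b l)))); last first.
{ move=> i; by rewrite -sumM /= Rmult_1_r. }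
rewrite exchange_big /=.
apply: eq_bigr => k _.
rewrite exchange_big /=.
rewrite (sum_ext (G := fun l => (b k * b l) * (if k == l then 1 else 0))).
- rewrite sum_delta /=; ring.
- move=> l. rewrite -hM -sumS; apply: sum_ext => i; ring.
Qed.

Definition coef n (V : mat n n) (z : 'I_n -> R) (k : 'I_n) := \big[Rplus/0]_(j < n) (V j k * z j).

Lemma key n (W U V : mat n n) (s : 'I_n -> R) (z : 'I_n -> R) :
  orthogonal_mat U -> (forall i j, W i j = \big[Rplus/0]_(k < n) (U i k * s k * V j k)) ->
  \big[Rplus/0]_(i < n) (\big[Rplus/0]_(j < n) (W i j * z j))^2 =
  \big[Rplus/0]_(k < n) (s k * coef V z k)^2.
Proof. move=> hU hW. rewrite -(orth_norm (fun k => s k * coef V z k) hU). apply: sum_ext => i. f_equal.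
transitivity (\big[Rplus/0]_(j < n) \big[Rplus/0]_(k < n) (U i k * s k * V j k * z j)).
{ apply: sum_ext => j; rewrite hW Rmult_comm -sumS; apply: sum_ext => k; ring. }
rewrite exchange_big /=; apply: sum_ext => k. rewrite /coef -!sumS; apply: sum_ext => j; ring.
Qed.

Lemma bessel n (V : mat n n) (z : 'I_n -> R) : orthogonal_mat V ->
  \big[Rplus/0]_(k < n) (coef V z k)^2 <= \big[Rplus/0]_(j < n) (z j)^2.
Proof. move=> hV.
have h0 : 0 <= \big[Rplus/0]_(j < n) (z j - 1 * \big[Rplus/0]_(k < n) (V j k * coef V z k))^2.
{ apply: sum_ge0 => j; apply: pow2_ge_0. }
rewrite sq_expand (orth_norm _ hV) in h0.
have e : \big[Rplus/0]_(j < n) (z j * \big[Rplus/0]_(k < n) (V j k * coef V z k)) =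
  \big[Rplus/0]_(k < n) (coef V z k)^2.
{ rewrite (sum_ext (G := fun j => \big[Rplus/0]_(k < n) (V j k * z j * coef V z k))); last first.
  { move=> j; rewrite -sumS; apply: sum_ext => k; ring. }
  rewrite exchange_big /=; apply: sum_ext => k. rewrite /coef Rmult_comm -sumS /=. 
  apply: sum_ext => j; ring. }
rewrite e in h0. move: h0. set A := \big[Rplus/0]_(k < n) coef V z k ^ 2. set B := \big[Rplus/0]_(j < n) z j ^ 2. lra. Qed.

Lemma jensen_row n (w z : 'I_n -> R) : (forall j, 0 <= w j) -> \big[Rplus/0]_(j < n) w j = 1 ->
  (\big[Rplus/0]_(j < n) (w j * z j))^2 <= \big[Rplus/0]_(j < n) (w j * (z j)^2).
Proof. move=> hw h1. set m := \big[Rplus/0]_(j < n) (w j * z j).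
have h0 : 0 <= \big[Rplus/0]_(j < n) (w j * (z j - m)^2).
{ apply: sum_ge0 => j; have := hw j; have := pow2_ge_0 (z j - m); nra. }
have e : \big[Rplus/0]_(j < n) (w j * (z j - m)^2) =
  \big[Rplus/0]_(j < n) (w j * (z j)^2) + (-2 * m) * \big[Rplus/0]_(j < n) (w j * z j) + m^2 * \big[Rplus/0]_(j < n) w j.
{ clearbody m. rewrite -!sumS -!sumD; apply: sum_ext => j; ring. }
rewrite e h1 -/m in h0. move: h0; set A := \big[Rplus/0]_(j < n) (w j * (z j)^2). lra. Qed.

Lemma ds_contr n (W : mat n n) (z : 'I_n -> R) : doubly_stochastic W ->
  \big[Rplus/0]_(i < n) (\big[Rplus/0]_(j < n) (W i j * z j))^2 <= \big[Rplus/0]_(j < n) (z j)^2.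
Proof. move=> [hpos [hrow hcol]].
apply: Rle_trans (sum_le (G := fun i => \big[Rplus/0]_(j < n) (W i j * (z j)^2)) _) _.
{ move=> i; exact: jensen_row. }
rewrite exchange_big /=; apply: Req_le; apply: sum_ext => j.
rewrite (sum_ext (G := fun i => (z j)^2 * W i j)); last by move=> i; ring.
rewrite sumS hcol; ring. Qed.

Lemma contraction n (hn : (1 < n)%nat) (W : mat n n) sigma (z : 'I_n -> R) :
  doubly_stochastic W -> second_singular_value hn W sigma -> sigma < 1 ->
  \big[Rplus/0]_(j < n) z j = 0 ->
  \big[Rplus/0]_(i < n) (\big[Rplus/0]_(j < n) (W i j * z j))^2 <= sigma^2 * \big[Rplus/0]_(j < n) (z j)^2.
Proof.
move=> hds [s [[[U [V [hU [hV hW]]]] [hs0 hsort]] hsig]] hlt hz.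
pose k0 : 'I_n := Ordinal (ltnW hn).
pose k1 : 'I_n := Ordinal hn.
have sig0 : 0 <= sigma by rewrite hsig; apply: hs0.
have s0sq : (s k0)^2 <= 1.
{ have := key (fun j => V j k0) hU hW.
  rewrite (sum_ext (F := fun k => (s k * coef V (fun j => V j k0) k)^2) (G := fun k => (s k)^2 * (if k0 == k then 1 else 0))); last first.
  { move=> k; rewrite /coef hV eq_sym; case: (k0 == k); ring. }
  rewrite sum_delta => e.
  have := ds_contr (fun j => V j k0) hds. rewrite e.
  have := hV k0 k0; rewrite eqxx => e2.
  have -> : \big[Rplus/0]_(j < n) V j k0 ^ 2 = \big[Rplus/0]_(k < n) (V k k0 * V k k0).
  { apply: sum_ext => j; ring. }
  by rewrite e2. }
have G : forall c : 'I_n -> R, \big[Rplus/0]_(k < n) (s k * c k)^2 <=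
    sigma^2 * \big[Rplus/0]_(k < n) (c k)^2 + (1 - sigma^2) * (c k0)^2.
{ move=> c. rewrite -(sum_delta (fun k => (c k)^2) k0) -!sumS -sumD.
  apply: sum_le => k. case: eqP => [<-|hne].
  - have := pow2_ge_0 (c k0). move=> *; nra.
  - have h1 : (1 <= k)%nat.
    { case: k hne => [[|m] hm] //= hne. exfalso; apply: hne. by apply: val_inj. }
    have := hsort k1 k h1. rewrite -hsig => hsk. have := hs0 k => hsk0.
    have : s k ^ 2 <= sigma ^ 2 by nra.
    have := pow2_ge_0 (c k). move=> *; nra. }
pose c1 := coef V (fun _ => 1).
have hones : \big[Rplus/0]_(k < n) (s k * c1 k)^2 = INR n.
{ rewrite -(key _ hU hW). rewrite (sum_ext (G := fun _ => 1)); first by rewrite sum_const; ring.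
  move=> i. case: hds => _ [hrow _].
  have -> : \big[Rplus/0]_(j < n) (W i j * 1) = \big[Rplus/0]_(j < n) W i j by apply: sum_ext => j; ring.
  by rewrite hrow; ring. }
have hb1 := bessel (fun _ => 1) hV. rewrite -/c1 in hb1.
have e1 : \big[Rplus/0]_(j < n) ((fun _ : 'I_n => 1) j)^2 = INR n.
{ rewrite (sum_ext (G := fun _ => 1)) ?sum_const //=; [ring| move=> j; ring]. }
rewrite e1 in hb1.
have hG1 := G c1. rewrite hones in hG1.
have ht := sum_term k0 (F := fun k => (c1 k)^2) (fun k => pow2_ge_0 _).
have hnpos : 2 <= INR n by apply: (le_INR 2); apply/leP.
have hc1 : INR n <= (c1 k0)^2.
{ move: hG1 hb1 ht. set A := \big[Rplus/0]_(k < n) (c1 k)^2. move=> h1 h2 h3.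
  have hs2 : sigma ^ 2 < 1 by nra.
  have : sigma^2 * A <= sigma^2 * INR n by apply: Rmult_le_compat_l; [nra|lra].
  move=> h4. have h5 : (1 - sigma^2) * (INR n - c1 k0 ^ 2) <= 0 by nra.
  case: (Rle_lt_dec (INR n) (c1 k0 ^2)) => // h6. nra. }
have hw : \big[Rplus/0]_(j < n) (c1 k0 * V j k0 - 1 * 1)^2 <= 0.
{ rewrite sq_expand.
  have -> : \big[Rplus/0]_(j < n) (c1 k0 * V j k0)^2 = (c1 k0)^2 * \big[Rplus/0]_(j < n) (V j k0 * V j k0).
  { rewrite -sumS; apply: sum_ext => j; ring. }
  have -> : \big[Rplus/0]_(j < n) (c1 k0 * V j k0 * 1) = c1 k0 * c1 k0.
  { rewrite -sumS /c1 /coef; apply: sum_ext => j; ring. }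
  have := hV k0 k0; rewrite eqxx => ->. 
  have -> : \big[Rplus/0]_(j < n) (1 ^ 2) = INR n by rewrite sum_const; ring.
  nra. }
have hcs := CS z (fun j => c1 k0 * V j k0 - 1 * 1).
have hzz : 0 <= \big[Rplus/0]_(j < n) (z j)^2 by apply: sum_ge0 => j; apply: pow2_ge_0.
have hw0 : 0 <= \big[Rplus/0]_(j < n) (c1 k0 * V j k0 - 1 * 1)^2 by apply: sum_ge0 => j; apply: pow2_ge_0.
have ezw : \big[Rplus/0]_(j < n) (z j * (c1 k0 * V j k0 - 1 * 1)) = c1 k0 * coef V z k0.
{ have -> : \big[Rplus/0]_(j < n) (z j * (c1 k0 * V j k0 - 1 * 1)) =
     c1 k0 * \big[Rplus/0]_(j < n) (V j k0 * z j) + (-1) * \big[Rplus/0]_(j < n) z j.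
  { rewrite -!sumS -sumD; apply: sum_ext => j; ring. }
  rewrite hz /coef; ring. }
rewrite ezw in hcs.
have hcz : coef V z k0 = 0.
{ move: hcs hzz hw0 hw. set P := \big[Rplus/0]_(j < n) (z j)^2.
  set Q := \big[Rplus/0]_(j < n) (c1 k0 * V j k0 - 1 * 1)^2. move=> hcs ? ? ?.
  have : (c1 k0 * coef V z k0)^2 <= 0 by nra.
  move=> h. have h2 : c1 k0 * coef V z k0 = 0 by nra.
  have : c1 k0 <> 0 by move=> e; rewrite e in hc1; nra.
  move=> hne. by case: (Rmult_integral _ _ h2). }
rewrite (key z hU hW).
have := G (coef V z). rewrite hcz. have := bessel z hV.
set A := \big[Rplus/0]_(k < n) (coef V z k)^2. set B := \big[Rplus/0]_(j < n) (z j)^2.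
move=> *. nra.
Qed.


Lemma dot_sq d (u : vec d) : dot u u = \big[Rplus/0]_(k < d) (u k)^2.
Proof. apply: sum_ext => k; ring. Qed.

Lemma dot_ge0 d (u : vec d) : 0 <= dot u u.
Proof. rewrite dot_sq; apply: sum_ge0 => k; apply: pow2_ge_0. Qed.

Lemma vnorm_sq d (u : vec d) : vnorm u ^ 2 = dot u u.
Proof. rewrite /vnorm /= Rmult_1_r sqrt_sqrt //; exact: dot_ge0. Qed.

Lemma aux_pq p q : 0 < p + q -> - 2 * (p / (p + q)) * p + (p / (p + q)) ^ 2 * q = - p^2 * (2 * p + q) / (p + q)^2.
Proof. move=> h; field; lra. Qed.

Lemma proj_close d (Om : vec d -> Prop) (v x y : vec d) :
  convex_vset Om -> Om x -> is_proj Om v y ->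
  dot (vsub y x) (vsub y x) <= dot (vsub v x) (vsub v x).
Proof.
move=> hc hx [hy hmin].
pose a := vsub v y. pose b := vsub x y.
have hl : forall l, 0 < l <= 1 ->
  \big[Rplus/0]_(k < d) (a k)^2 <= \big[Rplus/0]_(k < d) (a k - l * b k)^2.
{ move=> l hl. have hz := hc x y l hx hy (conj (Rlt_le _ _ (proj1 hl)) (proj2 hl)).
  have := hmin _ hz. rewrite /vnorm => h0.
  have h := sqrt_le_0 _ _ (dot_ge0 _) (dot_ge0 _) h0.
  rewrite dot_sq in h. rewrite dot_sq in h.
  move: h. rewrite /a /b /vsub /vadd /vscale. 
  have -> : \big[Rplus/0]_(k < d) (v k - (l * x k + (1 - l) * y k)) ^ 2 =
     \big[Rplus/0]_(k < d) (v k - y k - l * (x k - y k)) ^ 2 by apply: sum_ext => k; ring.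
  done. }
pose p := \big[Rplus/0]_(k < d) (a k * b k).
pose q := \big[Rplus/0]_(k < d) (b k)^2.
have hq : 0 <= q by apply: sum_ge0 => k; apply: pow2_ge_0.
have hp : p <= 0.
{ case: (Rle_lt_dec p 0) => // hp. exfalso.
  have hpq : 0 < p + q by lra.
  have hl1 : 0 < p / (p + q) <= 1.
  { split; first by apply: Rdiv_lt_0_compat.
    apply: (Rmult_le_reg_r (p + q)) => //. field_simplify; lra. }
  have := hl _ hl1. rewrite sq_expand -/p -/q.
  set A := \big[Rplus/0]_(k < d) (a k)^2. set l := p / (p + q). move=> h.
  have h2 : 0 <= - 2 * l * p + l ^ 2 * q by lra.
  rewrite /l in h2.
  have e : - 2 * (p / (p + q)) * p + (p / (p + q)) ^ 2 * q = - p^2 * (2 * p + q) / (p + q)^2 by apply: aux_pq.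
  rewrite e in h2.
  have : 0 < p ^ 2 * (2 * p + q) / (p + q) ^ 2.
  { apply: Rdiv_lt_0_compat; [apply: Rmult_lt_0_compat; nra | nra]. }
  lra. }
rewrite !dot_sq.
have -> : \big[Rplus/0]_(k < d) (vsub v x k)^2 = \big[Rplus/0]_(k < d) (a k - 1 * b k)^2.
{ apply: sum_ext => k; rewrite /a /b /vsub; ring. }
have -> : \big[Rplus/0]_(k < d) (vsub y x k)^2 = q.
{ apply: sum_ext => k; rewrite /b /vsub; ring. }
rewrite sq_expand -/p -/q.
have : 0 <= \big[Rplus/0]_(k < d) (a k)^2 by apply: sum_ge0 => k; apply: pow2_ge_0.
set A := \big[Rplus/0]_(k < d) (a k)^2. move=> hA. clearbody p q. lra.
Qed.

Lemma conv_comb d (Om : vec d -> Prop) : convex_vset Om ->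
  forall m (w : 'I_m -> R) (p : 'I_m -> vec d), (forall j, 0 <= w j) ->
  \big[Rplus/0]_(j < m) w j = 1 -> (forall j, Om (p j)) ->
  Om (fun k => \big[Rplus/0]_(j < m) (w j * p j k)).
Proof.
move=> hc m; elim: m => [|m IH] w p hw h1 hp.
{ rewrite big_ord0 in h1. lra. }
rewrite big_ord_recr /= in h1.
have ->: (fun k => \big[Rplus/0]_(j < m.+1) (w j * p j k)) =
         (fun k => \big[Rplus/0]_(j < m) (w (widen_ord (leqnSn m) j) * p (widen_ord (leqnSn m) j) k) + w ord_max * p ord_max k).
{ apply: functional_extensionality => k. by rewrite big_ord_recr. }
pose w' := fun j : 'I_m => w (widen_ord (leqnSn m) j).
pose p' := fun j : 'I_m => p (widen_ord (leqnSn m) j).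
pose a := w ord_max. pose pm := p ord_max.
have hw' : forall j : 'I_m, 0 <= w' j by move=> j; apply: hw.
have hp' : forall j : 'I_m, Om (p' j) by move=> j; apply: hp.
have ha : 0 <= a := hw ord_max. have hpm : Om pm := hp ord_max.
change (\big[Rplus/0]_(j < m) w' j + a = 1) in h1.
change (Om (fun k => \big[Rplus/0]_(j < m) (w' j * p' j k) + a * pm k)).
clearbody w' p' a pm.
have hS : 0 <= \big[Rplus/0]_(j < m) w' j by apply: sum_ge0.
case: (Req_dec a 1) => ha1.
- have hw0 : forall j, w' j = 0.
  { move=> j. apply: (sum0_each (F := w')) => //. move: h1 hS. set S := \big[Rplus/0]_(j < m) w' j. lra. }
  have -> : (fun k => \big[Rplus/0]_(j < m) (w' j * p' j k) + a * pm k) = pm.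
  { apply: functional_extensionality => k. rewrite big1 ?ha1; first ring.
    move=> j _; rewrite hw0; ring. }
  exact: hpm.
- have hlt : 0 < 1 - a. { move: h1 hS. set S := \big[Rplus/0]_(j < m) w' j. lra. }
  have hq := IH (fun j => w' j / (1 - a)) p'.
  have hq' : Om (fun k => \big[Rplus/0]_(j < m) (w' j / (1 - a) * p' j k)).
  { apply: hq.
    - move=> j; apply: Rmult_le_pos; [apply: hw' | apply: Rlt_le; apply: Rinv_0_lt_compat; lra].
    - rewrite (sum_ext (G := fun j => / (1 - a) * w' j)); last by move=> j; rewrite /Rdiv Rmult_comm.
      rewrite sumS. move: h1. set S := \big[Rplus/0]_(j < m) w' j. move=> h1.
      have -> : S = 1 - a by lra. field; lra.
    - move=> j; apply: hp'. }
  have ha1' : a <= 1 by lra.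
  have := hc _ _ a hpm hq' (conj ha ha1').
  have -> : vadd (vscale a pm) (vscale (1 - a) (fun k => \big[Rplus/0]_(j < m) (w' j / (1 - a) * p' j k))) =
    (fun k => \big[Rplus/0]_(j < m) (w' j * p' j k) + a * pm k) => //.
  apply: functional_extensionality => k. rewrite /vadd /vscale -sumS.
  rewrite (sum_ext (F := fun j => (1 - a) * (w' j / (1 - a) * p' j k)) (G := fun j => w' j * p' j k)); last first.
  { move=> j; field; lra. }
  by rewrite Rplus_comm.
Qed.


Lemma ce_sum0 n d (Y : mat n d) k : (0 < n)%nat ->
  \big[Rplus/0]_(j < n) consensus_err Y j k = 0.
Proof. move=> hn. rewrite /consensus_err /row_avg.
have hn' : INR n <> 0 by apply: not_0_INR; apply/eqP; rewrite -lt0n.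
rewrite (sum_ext (G := fun j => Y j k + (- (/ INR n * \big[Rplus/0]_(i < n) Y i k)))) // sumD sum_const.
move: (\big[Rplus/0]_(i < n) Y i k) => S. field. exact: hn'. Qed.

Lemma ce_mmul n d (W : mat n n) (Y : mat n d) i k : doubly_stochastic W -> (0 < n)%nat ->
  consensus_err (mmul W Y) i k = \big[Rplus/0]_(j < n) (W i j * consensus_err Y j k).
Proof. move=> [hpos [hrow hcol]] hn.
have ha : row_avg (mmul W Y) k = row_avg Y k.
{ rewrite /row_avg /mmul; f_equal. rewrite exchange_big /=. apply: sum_ext => j.
  rewrite (sum_ext (G := fun i0 => Y j k * W i0 j)) ?sumS ?hcol; [ring | move=> i0; ring]. }
rewrite /consensus_err ha.
rewrite (sum_ext (G := fun j => W i j * Y j k + (- row_avg Y k) * W i j)); last by move=> j; ring.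
rewrite sumD sumS hrow /mmul Rmult_1_r; reflexivity. Qed.

Lemma frob_pair n d (M : mat n d) :
  frob M = sqrt (\big[Rplus/0]_(p : 'I_n * 'I_d) (M p.1 p.2)^2).
Proof. rewrite /frob pair_big /=. f_equal. apply: sum_ext => p; ring. Qed.

Lemma frob_ge0 n d (M : mat n d) : 0 <= frob M.
Proof. exact: sqrt_pos. Qed.

Lemma frob_tri n d (A B : mat n d) :
  frob (fun i k => A i k + B i k) <= frob A + frob B.
Proof. rewrite !frob_pair. exact: mink. Qed.

Lemma frob_contr n (hn : (1 < n)%nat) d (W : mat n n) sigma (Y : mat n d) :
  doubly_stochastic W -> second_singular_value hn W sigma -> sigma < 1 ->
  frob (consensus_err (mmul W Y)) <= sigma * frob (consensus_err Y).
Proof. move=> hds hsv hlt.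
have hn0 : (0 < n)%nat by apply: ltnW.
have sig0 : 0 <= sigma.
{ case: hsv => s [[_ [hs0 _]] ->]. apply: hs0. }
rewrite /frob -(sqrt_pow2 sigma sig0) -sqrt_mult; try (by apply: pow2_ge_0); last first.
{ apply: sum_ge0 => i; apply: sum_ge0 => k; nra. }
apply: sqrt_le_1_alt.
rewrite exchange_big /= [X in _ <= _ * X]exchange_big /= -sumS.
apply: sum_le => k.
rewrite (sum_ext (F := fun i => consensus_err (mmul W Y) i k * consensus_err (mmul W Y) i k)
  (G := fun i => (\big[Rplus/0]_(j < n) (W i j * consensus_err Y j k))^2)); last first.
{ move=> i; rewrite ce_mmul //; ring. }
have := contraction (z := fun j => consensus_err Y j k) hds hsv hlt (ce_sum0 Y k hn0).
move=> h. apply: Rle_trans h _. apply: Req_le. f_equal. apply: sum_ext => i; ring. Qed.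

Lemma frob_ce_le n d (D : mat n d) : (0 < n)%nat -> frob (consensus_err D) <= frob D.
Proof. move=> hn. rewrite /frob. apply: sqrt_le_1_alt.
rewrite exchange_big /= [X in _ <= X]exchange_big /=. apply: sum_le => k.
have hn' : 0 < INR n by apply: lt_0_INR; apply/ltP.
rewrite /consensus_err /row_avg.
set S := \big[Rplus/0]_(i < n) D i k.
have e := sq_expand (I := 'I_n) (fun i => D i k) (fun _ => 1) (/ INR n * S).
rewrite (sum_ext (G := fun i => (D i k - / INR n * S * 1)^2)); last by move=> i; ring.
rewrite e.
rewrite (sum_ext (F := fun i => D i k * 1) (G := fun i => D i k)); last by move=> i; ring.
rewrite (sum_ext (F := fun i => 1 ^ 2) (G := fun _ => 1)); last by move=> i; ring.
rewrite sum_const -/S.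
rewrite (sum_ext (F := fun i => D i k * D i k) (G := fun i => (D i k)^2)); last by move=> i; ring.
move: (\big[Rplus/0]_(i < n) (D i k)^2) => T.
have : - 2 * (/ INR n * S) * S + (/ INR n * S) ^ 2 * (INR n * 1) = - (S ^ 2 / INR n) by field; lra.
have : 0 <= S^2 / INR n by apply: Rmult_le_pos; [apply: pow2_ge_0 | apply: Rlt_le; apply: Rinv_0_lt_compat].
move=> h1 h2. lra. Qed.

Lemma frob_rows n d (D : mat n d) r : 0 <= r ->
  (forall i, \big[Rplus/0]_(k < d) (D i k)^2 <= r^2) -> frob D <= sqrt (INR n) * r.
Proof. move=> hr h. rewrite /frob -(sqrt_pow2 r hr) -sqrt_mult; [|apply: pos_INR| apply: pow2_ge_0].
apply: sqrt_le_1_alt. rewrite -sum_const. apply: sum_le => i.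
apply: Rle_trans (h i). apply: Req_le; apply: sum_ext => k; ring. Qed.


Fixpoint Sq (sigma : R) (alpha : nat -> R) (j : nat) : R :=
  match j with 0%nat => 0 | j'.+1 => sigma * (Sq sigma alpha j' + alpha j) end.

Lemma exp_le x y : x <= y -> exp x <= exp y.
Proof. case=> h; [apply: Rlt_le; exact: exp_increasing | rewrite h; lra]. Qed.

Lemma exp_pow a r : exp a ^ r = exp (INR r * a).
Proof. elim: r => [|r IH]; first by rewrite /= Rmult_0_l exp_0.
change (exp a * exp a ^ r = exp (INR r.+1 * a)). rewrite IH S_INR -exp_plus. f_equal. ring. Qed.

Lemma Sq_ge0 sigma alpha j : 0 <= sigma -> (forall k, (1 <= k)%nat -> 0 < alpha k) -> 0 <= Sq sigma alpha j.
Proof. move=> hs ha; elim: j => [|j IH] /=; first lra.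
have := ha j.+1 isT. move=> h. apply: Rmult_le_pos => //; lra. Qed.

Lemma Sq_crude sigma alpha M j : 0 <= sigma <= 1 -> (forall k, (1 <= k)%nat -> 0 < alpha k) ->
  (forall k, (1 <= k)%nat -> alpha k <= M) -> Sq sigma alpha j <= INR j * M.
Proof. move=> hs ha hM; elim: j => [|j IH]; first (simpl; lra).
have := ha j.+1 isT. have := hM j.+1 isT. have := Sq_ge0 j (proj1 hs) ha.
rewrite S_INR /=. move=> h1 h2 h3.
have : sigma * (Sq sigma alpha j + alpha j.+1) <= Sq sigma alpha j + alpha j.+1.
{ have : 0 <= Sq sigma alpha j + alpha j.+1 by lra. nra. }
lra. Qed.

Lemma Sq_shift sigma alpha K i0 : 0 <= sigma < 1 ->
  (forall k, (i0 < k)%nat -> alpha k <= K) -> forall p,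
  (1 - sigma) * Sq sigma alpha (i0 + p) <= (1 - sigma) * sigma ^ p * Sq sigma alpha i0 + K * sigma * (1 - sigma ^ p).
Proof. move=> hs hK; elim=> [|p IH].
- rewrite addn0 /=; lra.
- rewrite addnS /=. have hk := hK (i0 + p).+1 (leq_trans (ltnSn i0) (leq_addr p i0.+1)).
  set S := Sq sigma alpha (i0 + p) in IH *. set S0 := Sq sigma alpha i0 in IH *.
  set a := alpha (i0 + p).+1 in hk *. set q := sigma ^ p in IH *.
  have h1 : (1 - sigma) * (sigma * (S + a)) = sigma * ((1 - sigma) * S) + sigma * (1 - sigma) * a by ring.
  rewrite h1.
  have h2 : sigma * ((1 - sigma) * S) <= sigma * ((1 - sigma) * q * S0 + K * sigma * (1 - q)).
  { apply: Rmult_le_compat_l; lra. }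
  have h3 : sigma * (1 - sigma) * a <= sigma * (1 - sigma) * K.
  { apply: Rmult_le_compat_l; nra. }
  have e : (1 - sigma) * (sigma * q) * S0 + K * sigma * (1 - sigma * q) =
     sigma * ((1 - sigma) * q * S0 + K * sigma * (1 - q)) + sigma * (1 - sigma) * K by ring.
  rewrite e. lra.
Qed.

From mathcomp Require Import zify.

Lemma Sq_bound sigma alpha M C t : 0 <= sigma < 1 ->
  (forall k, (1 <= k)%nat -> 0 < alpha k) ->
  (forall s t, (1 <= s)%nat -> (s <= t)%nat -> alpha t <= alpha s) ->
  (forall k, (1 <= k)%nat -> alpha k <= M) ->
  ((2 <= t)%nat -> alpha (t./2) <= C * alpha t) -> 0 < C -> (1 <= t)%nat ->
  2 / (1 - sigma) * ln ((1 - sigma) * INR t * M / (C * alpha t)) <= INR t ->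
  Sq sigma alpha (t.-1) <= 2 * (C * alpha t) / (1 - sigma).
Proof.
move=> hs ha hmono hM hC hC0 ht hcond.
have hat := ha t ht.
have hK : 0 < C * alpha t by apply: Rmult_lt_0_compat.
have h1s : 0 < 1 - sigma by lra.
have hM0 : 0 < M by have := ha 1%nat isT; have := hM 1%nat isT; lra.
move: hcond. move: (C * alpha t) hK (hC) => K hK hCK hcond.
have hgoal : (1 - sigma) * Sq sigma alpha t.-1 <= 2 * K.
2: { apply: (Rmult_le_reg_l (1 - sigma)) => //. 
     have -> : (1 - sigma) * (2 * K / (1 - sigma)) = 2 * K by field; lra. done. }
case: (leqP t 1) => ht1.
{ have -> : t = 1%nat by lia. rewrite /=. lra. }
have ht2 : (2 <= t)%nat by lia.
have hCK' := hCK ht2.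
set m := t./2 in hCK'.
have hod := odd_double_half t. rewrite -/m -addnn in hod.
have hm1 : (m + m <= t)%nat by move: hod; case: (odd t) => /=; lia.
have hm2 : (t <= m + m + 1)%nat by move: hod; case: (odd t) => /=; lia.
have hm0 : (1 <= m)%nat by lia.
have hKk : forall k, (m.-1 < k)%nat -> alpha k <= K.
{ move=> k hk. apply: Rle_trans (hmono m k hm0 _) hCK'. lia. }
have hsh := Sq_shift hs hKk (t - m).
rewrite (_ : (m.-1 + (t - m))%nat = t.-1) in hsh; last by lia.
set r := (t - m)%nat in hsh.
have hr : INR t <= 2 * INR r.
{ have : (t <= 2 * r)%nat by rewrite /r; lia.
  move/leP/le_INR. rewrite mult_INR /=. lra. }
have hcr := Sq_crude (M := M) m.-1 (conj (proj1 hs) (Rlt_le _ _ (proj2 hs))) ha hM.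
have hmt : INR m.-1 <= INR t by apply: le_INR; apply/leP; lia.
have hSq0 := Sq_ge0 m.-1 (proj1 hs) ha.
have hsr0 : 0 <= sigma ^ r by apply: pow_le; lra.
have hsr1 : sigma ^ r <= 1 by rewrite -(pow1 r); apply: pow_incr; lra.
set A := (1 - sigma) * INR t * M / K in hcond.
have hA0 : 0 < A.
{ rewrite /A. apply: Rdiv_lt_0_compat => //. apply: Rmult_lt_0_compat => //.
  apply: Rmult_lt_0_compat => //. apply: lt_0_INR; apply/ltP; lia. }
have hsA : sigma ^ r * A <= 1.
{ case: (Rle_lt_dec A 1) => hA1.
  - have : sigma ^ r * A <= 1 * 1 by apply: Rmult_le_compat; lra. lra.
  - have hlnA : ln A <= (1 - sigma) * INR t / 2.
    { have : (1 - sigma) / 2 * (2 / (1 - sigma) * ln A) <= (1 - sigma) / 2 * INR t.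
      { apply: Rmult_le_compat_l => //; lra. }
      have -> : (1 - sigma) / 2 * (2 / (1 - sigma) * ln A) = ln A by field; lra. lra. }
    have e1 : sigma ^ r <= exp (sigma - 1) ^ r.
    { apply: pow_incr. split; first lra.
      case: (Req_dec (sigma - 1) 0) => h0; first lra.
      have := exp_ineq1 _ h0. lra. }
    rewrite exp_pow in e1.
    have e2 : exp (INR r * (sigma - 1)) <= exp (- ln A).
    { apply: exp_le. nra. }
    rewrite exp_Ropp exp_ln // in e2.
    have : sigma ^ r * A <= / A * A by apply: Rmult_le_compat_r; lra.
    have -> : / A * A = 1 by field; lra. done. }
have hb : (1 - sigma) * sigma ^ r * Sq sigma alpha m.-1 <= K.
{ have : Sq sigma alpha m.-1 <= INR t * M.
  { apply: Rle_trans hcr _. apply: Rmult_le_compat_r; lra. }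
  move=> hSt.
  have : (1 - sigma) * sigma ^ r * Sq sigma alpha m.-1 <= (1 - sigma) * sigma ^ r * (INR t * M).
  { apply: Rmult_le_compat_l => //. apply: Rmult_le_pos; lra. }
  have -> : (1 - sigma) * sigma ^ r * (INR t * M) = sigma ^ r * A * K by rewrite /A; field; lra.
  have : sigma ^ r * A * K <= 1 * K by apply: Rmult_le_compat_r; lra.
  lra. }
have : K * sigma * (1 - sigma ^ r) <= K.
{ have : sigma * (1 - sigma ^ r) <= 1 by nra. nra. }
move: hsh hb. set S1 := Sq sigma alpha t.-1. set S0 := Sq sigma alpha m.-1.
move=> *. lra.
Qed.


Unset Implicit Arguments.
Theorem lemma3 :
  exists c : R, 0 < c /\
  forall (n d : nat) (hn : (1 < n)%nat)
    (f : 'I_n -> vec d -> R) (L : R) (Om : vec d -> Prop)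
    (W : mat n n) (sigma : R)
    (alpha : nat -> R) (Calpha Calpha' alpha_max : R)
    (x y g : nat -> mat n d),
    (* objective functions *)
    (forall i, convex_fun (f i)) ->
    (forall i z h, is_subgradient (f i) z h -> vnorm h <= L) ->
    (* constraint set *)
    convex_vset Om -> closed_vset Om ->
    (* mixing matrix *)
    doubly_stochastic W ->
    (forall i, 0 < W i i) ->
    strongly_connected W ->
    second_singular_value hn W sigma -> sigma < 1 ->
    (* step sizes (indexed from t = 1) *)
    (forall t, (1 <= t)%nat -> 0 < alpha t) ->
    (forall s t, (1 <= s)%nat -> (s <= t)%nat -> alpha t <= alpha s) ->
    (exists l, Un_cv (fun T => psum (fun k => alpha k ^ 2) 1 T) l) ->
    cv_infty (fun T => psum alpha 1 T) ->
    (forall t, (1 <= t)%nat -> psum alpha 1 t <= Calpha * psum alpha (uphalf t) t) ->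
    (forall t, (2 <= t)%nat -> alpha (t./2) <= Calpha' * alpha t) ->
    (forall t, (1 <= t)%nat -> alpha t <= alpha_max) ->
    (exists t, (1 <= t)%nat /\ alpha t = alpha_max) ->
    (* iteration x(t+1) = W P_Om[x(t) - alpha(t) g(t)], started at t = 1 *)
    (exists x0 : vec d, Om x0 /\ forall i k, x 1%nat i k = x0 k) ->
    (forall t i, (1 <= t)%nat -> is_subgradient (f i) (x t i) (g t i)) ->
    (forall t i, (1 <= t)%nat ->
       is_proj Om (vsub (x t i) (vscale (alpha t) (g t i))) (y t i)) ->
    (forall t, (1 <= t)%nat -> forall i k, x t.+1 i k = mmul W (y t) i k) ->
    (* conclusion *)
    forall t : nat, (1 <= t)%nat ->
      c / (1 - sigma) * ln ((1 - sigma) * INR t * alpha_max / (Calpha' * alpha t)) <= INR t ->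
      frob (consensus_err (x t)) <= 2 * Calpha' * alpha t * L * sqrt (INR n) / (1 - sigma).
Proof.
exists 2; split; first lra.
move=> n d hn f L Om W sigma alpha Ca Ca' amax x y g hf hL hconv hclosed hds hdiag hsc hsv hlt
  hapos hmono hsq hinf hCa hCa' hamax hatt [x0 [hx0 hx1]] hsub hproj hx t ht hcond.
have hn0 : (0 < n)%nat by apply: ltnW.
have sig0 : 0 <= sigma by case: hsv => s [[_ [hs0 _]] ->]; apply: hs0.
pose i0 : 'I_n := Ordinal hn0.
have hL0 : 0 <= L.
{ have := hL i0 _ _ (hsub 1%nat i0 isT). have := sqrt_pos (dot (g 1%nat i0) (g 1%nat i0)).
  rewrite /vnorm. lra. }
have hC0 : 0 < Ca'.
{ have := hCa' 2%nat isT. have := hapos 1%nat isT. have := hapos 2%nat isT. simpl. move=> *. nra. }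
have hxOm : forall t, (1 <= t)%nat -> forall i, Om (x t i).
{ elim=> [//|t' IH] ht' i.
  case: (posnP t') => [->|ht0].
  - have -> : x 1%nat i = x0 by apply: functional_extensionality => k; apply: hx1.
    exact: hx0.
  - have -> : x t'.+1 i = (fun k => \big[Rplus/0]_(j < n) (W i j * y t' j k)).
    { apply: functional_extensionality => k. by rewrite hx. }
    case: hds => hpos [hr hc].
    apply: conv_comb => //. move=> j. exact: (proj1 (hproj t' j ht0)). }
have hrow : forall t, (1 <= t)%nat -> forall i,
   \big[Rplus/0]_(k < d) (y t i k - x t i k)^2 <= (alpha t * L)^2.
{ move=> t' ht' i.
  have := proj_close hconv (hxOm t' ht' i) (hproj t' i ht').
  rewrite dot_sq.
  have -> : dot (vsub (vsub (x t' i) (vscale (alpha t') (g t' i))) (x t' i))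
                (vsub (vsub (x t' i) (vscale (alpha t') (g t' i))) (x t' i)) =
            alpha t' ^ 2 * dot (g t' i) (g t' i).
  { rewrite /dot -sumS; apply: sum_ext => k; rewrite /vsub /vscale; ring. }
  rewrite -vnorm_sq.
  have hv := hL i _ _ (hsub t' i ht').
  have hv0 : 0 <= vnorm (g t' i) by apply: sqrt_pos.
  have : vnorm (g t' i) ^ 2 <= L ^ 2 by apply: pow_incr; lra.
  move=> h2 h1. 
  have h3 : alpha t' ^ 2 * vnorm (g t' i) ^ 2 <= alpha t' ^ 2 * L ^ 2.
  { apply: Rmult_le_compat_l => //; apply: pow2_ge_0. }
  apply: Rle_trans h1 _. rewrite Rpow_mult_distr.
  exact: h3. }
have hrec : forall t, (1 <= t)%nat ->
  frob (consensus_err (x t.+1)) <= sigma * (frob (consensus_err (x t)) + sqrt (INR n) * (alpha t * L)).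
{ move=> t' ht'.
  have -> : x t'.+1 = mmul W (y t').
  { apply: functional_extensionality => i; apply: functional_extensionality => k. by rewrite hx. }
  apply: Rle_trans (frob_contr (y t') hds hsv hlt) _.
  apply: Rmult_le_compat_l sig0 _.
  have -> : consensus_err (y t') = (fun i k => consensus_err (x t') i k + consensus_err (fun i k => y t' i k - x t' i k) i k).
  { apply: functional_extensionality => i; apply: functional_extensionality => k.
    rewrite /consensus_err /row_avg.
    rewrite (sum_ext (F := fun i => y t' i k - x t' i k) (G := fun i => y t' i k + (-1) * x t' i k)); last by move=> j; ring.
    rewrite sumD sumS. set Sy := \big[Rplus/0]_(i1 < n) y t' i1 k. set Sx := \big[Rplus/0]_(i1 < n) x t' i1 k. ring. }
  apply: Rle_trans (frob_tri _ _) _. apply: Rplus_le_compat_l.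
  apply: Rle_trans (frob_ce_le _ hn0) _. apply: frob_rows.
  - have := hapos t' ht'. nra.
  - move=> i; exact: hrow. }
have he1 : frob (consensus_err (x 1%nat)) = 0.
{ rewrite /frob big1 ?sqrt_0 // => i _. rewrite big1 // => k _.
  rewrite /consensus_err /row_avg.
  rewrite (sum_ext (F := fun i => x 1%nat i k) (G := fun _ => x0 k)); last by move=> j; apply: hx1.
  rewrite sum_const hx1. have : INR n <> 0 by apply: not_0_INR; apply/eqP; rewrite -lt0n.
  move=> hn'. field_simplify => //. }
have hclaim : forall j, frob (consensus_err (x j.+1)) <= sqrt (INR n) * L * Sq sigma alpha j.
{ elim=> [|j IH]; first by rewrite he1 /=; lra.
  apply: Rle_trans (hrec j.+1 isT) _. 
  change (Sq sigma alpha j.+1) with (sigma * (Sq sigma alpha j + alpha j.+1)).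
  have hsn := sqrt_pos (INR n).
  have : frob (consensus_err (x j.+1)) + sqrt (INR n) * (alpha j.+1 * L) <=
         sqrt (INR n) * L * (Sq sigma alpha j + alpha j.+1) by lra.
  move=> h. have := Rmult_le_compat_l _ _ _ sig0 h. move=> h'. apply: Rle_trans h' _. apply: Req_le; ring. }
have hb := Sq_bound (conj sig0 hlt) hapos hmono hamax (hCa' t) hC0 ht hcond.
have := hclaim t.-1. rewrite prednK //. move=> h. apply: Rle_trans h _.
have hsn := sqrt_pos (INR n).
have : sqrt (INR n) * L * Sq sigma alpha t.-1 <= sqrt (INR n) * L * (2 * (Ca' * alpha t) / (1 - sigma)).
{ apply: Rmult_le_compat_l => //; nra. }
move=> h. apply: Rle_trans h _. apply: Req_le. field. lra.
Qed.
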